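(* $\varphi(I_n^{0,1})=\varphi(I_n^0)=\mathring{\mathcal{P}}_n$.
   Context: $B_n$ is the group of signed permutations $w=w_1\dots w_n$ of $[n]$ (bijections of $\{\pm1,\dots,\pm n\}$ with $w(-i)=-w(i)$), values ordered $\cdots<-2<-1<1<2<\cdots$, with $w_0=0$; $\mathrm{Des}(w)=\{i\in\{0,\dots,n-1\}: w_i>w_{i+1}\}$. For $J\subseteq\{0,\dots,n-1\}$, $X_J=\sum_{\mathrm{Des}(w)\subseteq J}w\in\mathbb{Q}B_n$. $I_n^0=\mathrm{span}\{X_J: 0\in J\}$ and $I_n^{0,1}=\mathrm{span}\{X_J: 0\in J \text{ or } 1\in J\}$. $\varphi:\mathbb{Q}B_n\to\mathbb{Q}\mathfrak{S}_n$ is the linear map forgetting signs, $w\mapsto|w_1|\dots|w_n|$. For $u\in\mathfrak{S}_n$, $\mathring{\mathrm{Peak}}(u)=\{i\in\{2,\dots,n-1\}: u_{i-1}<u_i>u_{i+1}\}$; $\mathring{\mathcal{F}}_n$ is the set of subsets of $\{2,\dots,n-1\}$ with no two consecutive integers; $\mathring{P}_F=\sum_{\mathring{\mathrm{Peak}}(u)=F}u$ and $\mathring{\mathcal{P}}_n=\mathrm{span}\{\mathring{P}_F: F\in\mathring{\mathcal{F}}_n\}$. *)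

(* Defs.v *)
From HB Require Import structures.
From mathcomp Require Import all_boot all_order all_fingroup all_algebra.
Set Implicit Arguments. Unset Strict Implicit. Unset Printing Implicit Defensive.
Import GRing.Theory Num.Theory.
Local Open Scope ring_scope.

Definition grpalg (G : finType) := {ffun G -> rat^o}.
Definition gelt (G : finType) (g : G) : grpalg G := [ffun h => (h == g)%:R].

(* Signed permutations of [n]: a pair (s, e) with s : 'S_n and e a sign vector;
   it represents w with w_(i+1) = (-1)^(e i) * (s i + 1) for i : 'I_n. *)
Definition signed_perm (n : nat) := ('S_n * {ffun 'I_n -> bool})%type.

(* w_k for k in 0..n (with w_0 = 0), as an integer. *)
Definition sval (n : nat) (w : signed_perm n) (k : nat) : int :=
  if k is k'.+1 then
    (if @insub _ (fun m => m < n)%N 'I_n k' is Some j then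
       (if w.2 j then - ((w.1 j).+1)%:Z else ((w.1 j).+1)%:Z)
     else 0)
  else 0.

(* Des(w) as a subset of {0,...,n-1} (i : 'I_n stands for i). *)
Definition Des (n : nat) (w : signed_perm n) : {set 'I_n} :=
  [set i : 'I_n | sval w i > sval w i.+1].

Definition X (n : nat) (J : {set 'I_n}) : grpalg (signed_perm n) :=
  \sum_(w : signed_perm n | Des w \subset J) gelt w.

(* phi : Q B_n -> Q S_n, w |-> |w_1| ... |w_n|, extended linearly. *)
Definition phi_fun (n : nat) (f : grpalg (signed_perm n)) : grpalg 'S_n :=
  [ffun u => \sum_(w : signed_perm n | w.1 == u) f w].
Definition phi (n : nat) : 'Hom(grpalg (signed_perm n), grpalg 'S_n) :=
  linfun (@phi_fun n).

Lemma phi_fun_linear n : linear (@phi_fun n).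
Proof.
move=> a f g; apply/ffunP=> u; rewrite !ffunE.
rewrite scaler_sumr -big_split /=.
by apply: eq_bigr => w _; rewrite !ffunE.
Qed.

Definition I0 (n : nat) : {vspace grpalg (signed_perm n)} :=
  <<[seq X J | J in [pred J : {set 'I_n} | [exists i in J, val i == 0%N]]]>>%VS.
Definition I01 (n : nat) : {vspace grpalg (signed_perm n)} :=
  <<[seq X J | J in [pred J : {set 'I_n} | [exists i in J, val i <= 1]%N]]>>%VS.

(* u_k for 1 <= k <= n, the value (1-based) of u at position k. *)
Definition uval (n : nat) (u : 'S_n) (k : nat) : nat :=
  if @insub _ (fun m => m < n)%N 'I_n k.-1 is Some j then (u j).+1 else 0.

(* interior peak set, positions in {2..n-1} represented in 'I_n.+1 *)
Definition Peak (n : nat) (u : 'S_n) : {set 'I_n.+1} :=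
  [set i : 'I_n.+1 | [&& 1 < i, i < n, uval u i.-1 < uval u i
                       & uval u i.+1 < uval u i]%N].

Definition Fring (n : nat) : pred {set 'I_n.+1} :=
  fun F => (F \subset [set i : 'I_n.+1 | (1 < i < n)%N])
            && [forall i in F, forall j in F, (val i).+1 != val j].

Definition Pk (n : nat) (F : {set 'I_n.+1}) : grpalg 'S_n :=
  \sum_(u : 'S_n | Peak u == F) gelt u.

Definition Pspace (n : nat) : {vspace grpalg 'S_n} :=
  <<[seq Pk F | F : {set 'I_n.+1} in @Fring n]>>%VS.

(* Main.v *)
Require Import Defs.
From HB Require Import structures.
From mathcomp Require Import all_boot all_order all_fingroup all_algebra.
From mathcomp Require Import zify.
Set Implicit Arguments. Unset Strict Implicit. Unset Printing Implicit Defensive.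
Import Order.TTheory GRing.Theory Num.Theory.


HB.instance Definition _ n :=
  GRing.isLinear.Build _ _ _ _ (@phi_fun n) (@phi_fun_linear n).

Lemma phiE n f : phi n f = phi_fun f.
Proof. by rewrite /phi lfunE. Qed.

Lemma gelt_sum (G : finType) (P : pred G) :
  (\sum_(u | P u) gelt u)%R = [ffun h => (P h)%:R%R].
Proof.
apply/ffunP=> h; rewrite sum_ffunE !ffunE.
case Ph: (P h).
  rewrite (bigD1 h) //= ffunE eqxx big1 ?addr0 // => u /andP[_ uh].
  by rewrite ffunE eq_sym (negbTE uh).
by apply: big1 => u Pu; rewrite ffunE; case: eqP => // hu; move: Pu; rewrite -hu Ph.
Qed.

Lemma card_boolP (P : pred bool) : #|P| = (P true + P false)%N.
Proof. rewrite -sum1_card big_mkcond big_bool /= !unfold_in. by case: (P true); case: (P false). Qed.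

Lemma cmp_lemma (a b : nat) (ea eb : bool) : (a != b)%N ->
  ((if ea then - (a.+1)%:Z else (a.+1)%:Z) <= (if eb then - (b.+1)%:Z else (b.+1)%:Z))%R
  = (if (a < b)%N then ~~ eb else ea).
Proof.
move=> nab; case: ea; case: eb => /=; case: ltnP => hab.
all: try (apply/idP; lia).
all: try (apply/negbTE/negP; lia).
Qed.

Section Main.
Variable m : nat.
Local Notation n := m.+1.

Definition sv (w : signed_perm n) (j : 'I_n) : int :=
  (if w.2 j then - ((w.1 j).+1)%:Z else ((w.1 j).+1)%:Z)%R.

Lemma svalS (w : signed_perm n) (j : 'I_n) : Defs.sval w j.+1 = sv w j.
Proof.
rewrite /Defs.sval; case: insubP => [j' _ hj|]; last by rewrite ltn_ord.
by have -> : j' = j by apply: val_inj.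
Qed.

Lemma inDes (w : signed_perm n) (i : 'I_n) :
  (i \in Des w) = ~~ (Defs.sval w i <= Defs.sval w i.+1)%R.
Proof. by rewrite inE ltNge. Qed.

Definition eN (e : {ffun 'I_n -> bool}) k := e (inord k).
Definition sN (s : 'S_n) k : nat := s (inord k).
Definition asc (s : 'S_n) k := (sN s k < sN s k.+1)%N.

Lemma sN_neq (s : 'S_n) k1 k2 : (k1 < n)%N -> (k2 < n)%N -> k1 != k2 -> sN s k1 != sN s k2.
Proof.
move=> h1 h2 h12; apply/negP => /eqP /val_inj /perm_inj /(congr1 (@nat_of_ord _)).
by rewrite !inordK // => /eqP; rewrite (negbTE h12).
Qed.

Lemma nondes (s : 'S_n) (e : {ffun 'I_n -> bool}) (i : 'I_n) :
  (Defs.sval (s, e) i <= Defs.sval (s, e) i.+1)%R =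
  if nat_of_ord i == 0%N then ~~ eN e 0 else (if asc s i.-1 then ~~ e i else eN e i.-1).
Proof.
case: i => [[|k] hk].
  have := svalS (s, e) (inord 0); rewrite inordK // => ->.
  rewrite /sv /eN /=; case: (e (inord 0)) => /=; lia.
have hk' : (k < n)%N by lia.
have := svalS (s, e) (inord k); rewrite inordK // => ->.
have := svalS (s, e) (Ordinal hk); rewrite /= => ->.
rewrite /sv /= cmp_lemma; last first.
  have hne : k != k.+1 by lia. have := sN_neq s hk' hk hne.
  by rewrite /sN; have -> : (inord k.+1 : 'I_n) = Ordinal hk by apply: val_inj; rewrite /= inordK.
rewrite /asc /sN; have -> : (inord k.+1 : 'I_n) = Ordinal hk by apply: val_inj; rewrite /= inordK.
by [].
Qed.

Section Count.
Variables (J : {set 'I_n}) (s : 'S_n).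

Definition inJ k := [exists i in J, val i == k].

Lemma inJ_ord (i : 'I_n) : inJ i = (i \in J).
Proof.
apply/existsP/idP => [[j /andP[jJ /eqP ji]]|iJ]; last by exists i; rewrite iJ eqxx.
by rewrite -(val_inj ji).
Qed.

Lemma inJ_nat k (hk : (k < n)%N) : inJ k = (Ordinal hk \in J).
Proof. by rewrite -inJ_ord. Qed.

Definition ff (c : 'I_n) := if nat_of_ord c == 0%N then ~~ inJ 0 else ~~ inJ c && asc s c.-1.
Definition ft (c : 'I_n) := [&& (c.+1 < n)%N, ~~ inJ c.+1 & ~~ asc s c].

Lemma des_subE (e : {ffun 'I_n -> bool}) :
  (Des (s, e) \subset J) = [forall c, (ff c ==> ~~ e c) && (ft c ==> e c)].
Proof.
have key i : (i \in Des (s, e)) = ~~ (if nat_of_ord i == 0%N then ~~ eN e 0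
      else (if asc s i.-1 then ~~ e i else eN e i.-1)) by rewrite inDes nondes.
apply/subsetP/forallP => [H c | H i].
  have cons (i : 'I_n) : i \notin J -> (if nat_of_ord i == 0%N then ~~ eN e 0
      else (if asc s i.-1 then ~~ e i else eN e i.-1)).
    by move=> iJ; apply: (contraR _ iJ) => hc; apply: H; rewrite key.
  apply/andP; split; apply/implyP.
    rewrite /ff; case: ifP => c0.
      move=> hJ; have cJ : c \notin J by rewrite -inJ_ord (eqP c0).
      have := cons c cJ; rewrite c0 /eN.
      by have -> : (inord 0 : 'I_n) = c by apply: val_inj; rewrite /= inordK // (eqP c0).
    move=> /andP[hJ ha]; have cJ : c \notin J by rewrite -inJ_ord.
    by have := cons c cJ; rewrite c0 ha.
  move=> /and3P[c1 nJ na].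
  have iJ : Ordinal c1 \notin J by rewrite -inJ_nat.
  by have := cons _ iJ; rewrite /= (negbTE na) /eN inord_val.
move=> iD; apply/negPn/negP => iJ; move: iD; rewrite key; apply/negP; rewrite negbK.
have niJ : inJ i = false by rewrite inJ_ord; apply/negbTE.
case: ifP => i0.
  have iJ0 : inJ 0 = false by rewrite -(eqP i0).
  have := H i; rewrite /ff i0 iJ0 /= /eN => /andP[/implyP h _].
  have -> : (inord 0 : 'I_n) = i by apply: val_inj; rewrite /= inordK // (eqP i0).
  by apply/negP => /h.
case: ifP => ha.
  by have := H i; rewrite /ff i0 niJ ha /= => /andP[/implyP h _]; apply/negP => /h.
have hi : (i.-1 < n)%N by have := ltn_ord i; lia.
have := H (inord i.-1); rewrite /ft /eN inordK // => /andP[_ /implyP h]; apply: h.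
have -> : i.-1.+1 = i by rewrite prednK // lt0n; apply/negbT.
by rewrite ltn_ord niJ ha.
Qed.

Definition Fc (c : 'I_n) : pred bool := [pred b | (ff c ==> ~~ b) && (ft c ==> b)].

Lemma card_Fc c : #|Fc c| = (if ff c then (if ft c then 0 else 1) else (if ft c then 1 else 2))%N.
Proof. rewrite card_boolP /Fc /=; by case: (ff c); case: (ft c). Qed.

Lemma count_family :
  #|[pred e : {ffun 'I_n -> bool} | Des (s, e) \subset J]| = (\prod_c #|Fc c|)%N.
Proof.
rewrite (@eq_card _ _ (family Fc)); last first.
  move=> e; rewrite !inE des_subE; apply/forallP/familyP => H c.
    by rewrite unfold_in /=; apply: H.
  by have := H c; rewrite unfold_in.
rewrite card_family foldrE /image_mem big_map big_enum /=.
by apply: eq_bigl => c; rewrite inE.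
Qed.

End Count.

Lemma uvalE (u : 'S_n) k : (k < n)%N -> uval u k.+1 = (sN u k).+1.
Proof.
move=> hk; rewrite /uval /=; case: insubP => [j _ hj|]; last by rewrite hk.
rewrite /sN; congr (_.+1); congr (nat_of_ord (u _)); apply: val_inj.
by rewrite /= inordK.
Qed.

Lemma desc_lt (u : 'S_n) k : (k.+1 < n)%N -> ~~ asc u k -> (sN u k.+1 < sN u k)%N.
Proof.
move=> hk; rewrite /asc -leqNgt leq_eqVlt => /orP[/eqP e|//].
have hne : k.+1 != k by lia.
have hk' : (k < n)%N by lia.
by have := sN_neq u hk hk' hne; rewrite e eqxx.
Qed.

Lemma peak_nat (u : 'S_n) (p : 'I_n.+1) : p \in Peak u ->
  exists q, [/\ nat_of_ord p = q.+2, (q.+2 < n)%N, asc u q & (sN u q.+2 < sN u q.+1)%N].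
Proof.
rewrite /Peak inE => /andP[h1 /andP[h2 /andP[h3 h4]]].
exists p.-2; have hp : nat_of_ord p = p.-2.+2 by lia.
rewrite hp in h2 h3 h4 *; split => //.
  by move: h3; rewrite /= !uvalE //; lia.
by move: h4; rewrite /= !uvalE //; lia.
Qed.

Lemma peak_in (u : 'S_n) q (hq : (q.+2 < n)%N) : asc u q -> (sN u q.+2 < sN u q.+1)%N ->
  (inord q.+2 : 'I_n.+1) \in Peak u.
Proof.
move=> ha hd; rewrite /Peak inE inordK; last by lia.
rewrite /= !uvalE //; try lia.
move: ha; rewrite /asc => ha.
by rewrite hq !ltnS ha hd.
Qed.

Section Count2.
Variables (J : {set 'I_n}) (s : 'S_n).
Local Notation inJ := (inJ J).
Local Notation ff := (ff J s).
Local Notation ft := (ft J s).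

Definition g (i : 'I_n) : 'I_n := if (nat_of_ord i == 0%N) || asc s i.-1 then i else inord i.-1.

Lemma g_ff (i : 'I_n) : i \notin J -> (nat_of_ord i == 0%N) || asc s i.-1 -> ff i.
Proof.
move=> iJ h; have niJ : inJ i = false by rewrite inJ_ord; apply/negbTE.
rewrite /ff; case: ifP => i0.
  by rewrite -(eqP i0) niJ.
by move: h; rewrite i0 /= niJ.
Qed.

Lemma g_ft (i : 'I_n) : i \notin J -> ~~ ((nat_of_ord i == 0%N) || asc s i.-1) ->
  ft (inord i.-1) /\ (nat_of_ord (inord i.-1 : 'I_n)).+1 = i.
Proof.
move=> iJ /norP[i0 ha]; have niJ : inJ i = false by rewrite inJ_ord; apply/negbTE.
have hi : (i.-1 < n)%N by have := ltn_ord i; lia.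
have e : i.-1.+1 = i by rewrite prednK // lt0n.
rewrite /ft inordK // e ltn_ord niJ; split => //.
Qed.

Lemma g_img : [set g i | i in ~: J] = [set c | ff c || ft c].
Proof.
apply/setP => c; rewrite inE; apply/imsetP/idP => [[i iJ ->]|].
  rewrite inE in iJ; rewrite /g; case: ifP => h; first by rewrite g_ff.
  by have [-> _] := g_ft iJ (negbT h); rewrite orbT.
case/orP => [hf|/and3P[c1 nJ na]].
  have cJ : c \notin J.
    rewrite -inJ_ord; move: hf; rewrite /ff; case: ifP => [/eqP c0|_ /andP[] //].
    by rewrite c0.
  exists c; first by rewrite inE.
  rewrite /g; move: hf; rewrite /ff; case: (boolP (nat_of_ord c == 0%N)) => c0; rewrite ?c0 ?(negbTE c0) //= => /andP[_ ha]; rewrite ha.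
  by [].
exists (Ordinal c1); first by rewrite inE -inJ_nat.
by rewrite /g /= (negbTE na) inord_val.
Qed.

Lemma g_inj : (forall c, ~~ (ff c && ft c)) -> {in ~: J &, injective g}.
Proof.
move=> nc.
have inv (i : 'I_n) : i \in ~: J -> (if ff (g i) then nat_of_ord (g i) else (g i).+1) = i.
  rewrite inE => iJ; case: (boolP ((nat_of_ord i == 0%N) || asc s i.-1)) => h.
    have -> : g i = i by rewrite /g h.
    by rewrite g_ff.
  have -> : g i = inord i.-1 by rewrite /g (negbTE h).
  have [hft e] := g_ft iJ h.
  by have := nc (inord i.-1); rewrite hft andbT => /negbTE ->.
by move=> i1 i2 h1 h2 e; apply: ord_inj; rewrite -(inv i1 h1) -(inv i2 h2) e.
Qed.

Lemma conflictE : inJ 0 || inJ 1 ->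
  [exists p in Peak s, ~~ inJ p.-1 && ~~ inJ p] = [exists c, ff c && ft c].
Proof.
move=> h01.
apply/existsP/existsP => [[p /andP[pP /andP[n1 n2]]]|[c /andP[hf ht]]].
  have [q [hp hq ha hd]] := peak_nat pP.
  exists (inord q.+1); rewrite /ff /ft inordK; last by lia.
  rewrite hp /= in n1 n2; rewrite n1 n2 ha hq /= /asc -leqNgt ltnW //.
move: hf ht; rewrite /ff /ft; case: ifP => c0.
  rewrite (eqP c0) => n0 /and3P[_ n1 _].
  by move: h01; rewrite (negbTE n0) (negbTE n1).
move=> /andP[n1 ha] /and3P[hc1 n2 hd].
have hc : nat_of_ord c = c.-1.+1 by rewrite prednK // lt0n c0.
exists (inord c.-1.+2 : 'I_n.+1).
rewrite inordK; last by lia.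
rewrite /= -hc n1 n2 andbT.
rewrite andbT.
have hq : (c.-1.+2 < n)%N by rewrite -hc.
have := peak_in hq; rewrite -hc; apply => //.
by apply: desc_lt.
Qed.

Lemma countE : inJ 0 || inJ 1 ->
  #|[pred e : {ffun 'I_n -> bool} | Des (s, e) \subset J]| =
  (if [exists p in Peak s, ~~ inJ p.-1 && ~~ inJ p] then 0 else 2 ^ #|J|)%N.
Proof.
move=> h01; rewrite count_family conflictE //; case: ifP => [/existsP[c /andP[hf ht]]|nc].
  by rewrite (bigD1 c) //= card_Fc hf ht.
have nc' c : ~~ (ff c && ft c) by apply: contraFN nc => h; apply/existsP; exists c.
rewrite (eq_bigr (fun c => if ~~ (ff c || ft c) then 2 else 1)%N); last first.
  by move=> c _; rewrite card_Fc; move: (nc' c); case: (ff c); case: (ft c).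
rewrite -big_mkcond prod_nat_const /=.
congr (_ ^ _).
have h1 : #|[set c | ff c || ft c]| = #|~: J|.
  by rewrite -g_img card_in_imset //; apply: g_inj.
have h2 := cardC [pred c | ff c || ft c].
have h3 := cardsC J.
rewrite card_ord in h2 h3.
have h4 : #|[set c | ff c || ft c]| = #|[pred c | ff c || ft c]|.
  by apply: eq_card => c; rewrite inE.
have -> : #|(fun i : 'I_n => ~~ (ff i || ft i))| = #|[predC [pred c | ff c || ft c]]|.
  by apply: eq_card => c; rewrite !inE.
move: h2; rewrite -h4 h1 => h2; apply/eqP.
by rewrite -(eqn_add2l #|~: J|) h2 addnC h3.
Qed.

End Count2.

Lemma ffunZE (G : finType) (k : rat) (f : grpalg G) x : (k *: f)%R x = (k * f x)%R.
Proof. by rewrite ffunE. Qed.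
Lemma ffunDE (G : finType) (f g : grpalg G) x : (f + g)%R x = (f x + g x)%R.
Proof. by rewrite ffunE. Qed.
Lemma ffunBE (G : finType) (f g : grpalg G) x : (f - g)%R x = (f x - g x)%R.
Proof. by rewrite !ffunE. Qed.

Definition D (F : {set 'I_n.+1}) (T : pred nat) : grpalg 'S_n :=
  (\sum_(u : 'S_n | (F \subset Peak u) && [forall p in Peak u, ~~ T p]) gelt u)%R.
Definition E (T : pred nat) := D set0 T.

Lemma DE F T u : D F T u = ((F \subset Peak u) && [forall p in Peak u, ~~ T p])%:R%R.
Proof. by rewrite /D gelt_sum ffunE. Qed.

Lemma EE T u : E T u = ([forall p in Peak u, ~~ T p])%:R%R.
Proof. by rewrite /E DE sub0set. Qed.

Lemma phi_sum (f : grpalg (signed_perm n)) h :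
  phi n f h = (\sum_(e : {ffun 'I_n -> bool}) f (h, e))%R.
Proof.
rewrite phiE ffunE.
transitivity (\sum_(p : signed_perm n | (p.1 == h) && true) f (p.1, p.2))%R.
  by apply: eq_big => [[a b]|[a b]] //=; rewrite andbT.
by rewrite -(pair_big (fun a : 'S_n => a == h) (fun _ => true) (fun a b => f (a, b))) big_pred1_eq.
Qed.

Lemma phiX (J : {set 'I_n}) : inJ J 0 || inJ J 1 ->
  phi n (X J) = ((2 ^ #|J|)%N%:R *: E (fun p => ~~ inJ J p.-1 && ~~ inJ J p))%R.
Proof.
move=> h01; apply/ffunP => h.
rewrite phi_sum ffunZE EE.
rewrite (eq_bigr (fun e => (Des (h, e) \subset J : nat)%:R%R)); last by move=> e _; rewrite /X gelt_sum ffunE.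
rewrite -natr_sum.
have -> : (\sum_(e : {ffun 'I_n -> bool}) (Des (h, e) \subset J : nat))%N =
    #|[pred e : {ffun 'I_n -> bool} | Des (h, e) \subset J]|.
  by rewrite -sum1_card [RHS]big_mkcond; apply: eq_bigr => e _; rewrite inE; case: (_ \subset _).
rewrite countE // -negb_exists_in.
by case: ifP => _ /=; rewrite ?mulr0 ?mulr1.
Qed.

Local Notation V := (phi n @: I0 n)%VS.

Lemma peak_noadj (u : 'S_n) (r q : 'I_n.+1) : r \in Peak u -> q \in Peak u ->
  nat_of_ord q != r.+1.
Proof.
rewrite /Peak !inE => /andP[_ /andP[_ /andP[_ a]]] /andP[_ /andP[_ /andP[b _]]].
apply/eqP => e; rewrite e /= in b; lia.
Qed.

Lemma eq_fin (A : {set 'I_n.+1}) (P1 P2 : pred 'I_n.+1) :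
  (forall p, p \in A -> P1 p = P2 p) -> [forall p in A, P1 p] = [forall p in A, P2 p].
Proof. by move=> H; apply: eq_forallb => p; case pA: (p \in A) => //=; apply: H. Qed.

Lemma XJ_I0 J : inJ J 0 -> phi n (X J) \in V.
Proof. by move=> h; apply: memv_img; apply: memv_span; apply: image_f. Qed.

Lemma E_closed T : (forall q, (1 < q < n)%N -> ~~ T q -> ~~ (T q.-1 && T q.+1)) -> E T \in V.
Proof.
move=> cl.
pose J := [set i : 'I_n | (nat_of_ord i == 0%N) || ~~ (T i || T i.+1)].
have inJE k : inJ J k = (k < n)%N && ((k == 0%N) || ~~ (T k || T k.+1)).
  case: (ltnP k n) => hk; first by rewrite (inJ_nat J hk) inE.
  by apply/negbTE/existsP => -[i /andP[_ /eqP /= ik]]; have := ltn_ord i; lia.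
have h0 : inJ J 0 by rewrite inJE.
have hE : E T = E (fun p => ~~ inJ J p.-1 && ~~ inJ J p).
  apply/ffunP => u; rewrite !EE; congr (_%:R%R); congr (nat_of_bool _); apply: eq_fin => p pP.
  have [q [hp hq _ _]] := peak_nat pP.
  have h1 : (q.+1 < n)%N by lia.
  rewrite hp /= !inJE h1 hq /=.
  have := cl q.+2; rewrite hq /=.
  by case: (T q.+1); case: (T q.+2); case: (T q.+3) => //= /(_ isT isT).
have h01 : inJ J 0 || inJ J 1 by rewrite h0.
have -> : E T = (((2 ^ #|J|)%N%:R)^-1 *: phi n (X J))%R.
  by rewrite phiX // scalerA mulVf ?scale1r -?hE // pnatr_eq0 expn_eq0.
by apply: memvZ; apply: XJ_I0.
Qed.

Definition gap (T : pred nat) q := [&& (1 < q)%N, (q < n)%N, ~~ T q, T q.-1 & T q.+1].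

Lemma E_all T : E T \in V.
Proof.
suff H : forall k T, (forall q, gap T q -> n - k <= q)%N -> E T \in V.
  by apply: (H n) => q _; rewrite subnn.
elim=> [|k IH] {}T HT.
  apply: E_closed => q /andP[h1 h2] nT; apply/negP => /andP[a b].
  have := HT q; rewrite /gap h1 h2 nT a b subn0 /= => /(_ isT); lia.
set p := (n - k.+1)%N.
case gp: (gap T p); last first.
  apply: IH => q gq; have := HT q gq; case: (eqVneq q p) => [e|ne].
    by rewrite e gp in gq.
  rewrite /p in ne; lia.
move: (gp); rewrite /gap => /and5P[p1 p2 np tl tr].
pose T0 := fun q => T q || (q == p).
pose T1 := fun q => T q && (q != p.+1).
pose T2 := fun q => T1 q || (q == p).
have idE : E T = (E T0 + E T1 - E T2)%R.
  apply/ffunP => u; rewrite ffunBE ffunDE !EE.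
  case: (boolP [exists q in Peak u, nat_of_ord q == p]) => [/existsP[q /andP[qP /eqP qp]]|nP].
    have f0 : [forall r in Peak u, ~~ T0 r] = false.
      apply/negbTE; rewrite negb_forall_in; apply/existsP; exists q.
      by rewrite qP /T0 qp eqxx orbT.
    have f2 : [forall r in Peak u, ~~ T2 r] = false.
      apply/negbTE; rewrite negb_forall_in; apply/existsP; exists q.
      by rewrite qP /T2 qp eqxx orbT.
    have f1 : [forall r in Peak u, ~~ T1 r] = [forall r in Peak u, ~~ T r].
      apply: eq_fin => r rP; rewrite /T1.
      by have := peak_noadj qP rP; rewrite qp => ->; rewrite andbT.
    by rewrite f0 f2 f1 add0r subr0.
  have nP' r : r \in Peak u -> (nat_of_ord r == p) = false.
    move=> rP; apply/negbTE; apply: contra nP => e; apply/existsP; exists r; by rewrite rP.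
  have f0 : [forall r in Peak u, ~~ T0 r] = [forall r in Peak u, ~~ T r].
    by apply: eq_fin => r rP; rewrite /T0 nP' // orbF.
  have f2 : [forall r in Peak u, ~~ T2 r] = [forall r in Peak u, ~~ T1 r].
    by apply: eq_fin => r rP; rewrite /T2 nP' // orbF.
  by rewrite f0 f2 addrK.
have gbound q : gap T q -> q != p -> (n - k <= q)%N.
  by move=> gq ne; have := HT q gq; rewrite /p in ne; lia.
rewrite idE; apply: rpredB; first apply: rpredD; apply: IH => q.
- rewrite /gap /T0 => /and5P[q1 q2 /norP[nTq qnp] lq rq]; apply: gbound => //.
  have lq' : T q.-1.
    move: lq => /orP[//|/eqP e]; have eq : q = p.+1 by lia.
    by move: nTq; rewrite eq tr.
  have rq' : T q.+1.
    move: rq => /orP[//|/eqP e]; have eq : q = p.-1 by lia.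
    by move: nTq; rewrite eq tl.
  by rewrite /gap q1 q2 nTq lq' rq'.
- rewrite /gap /T1 => /and5P[q1 q2 nq /andP[lq lne] /andP[rq rne]].
  have qne : q != p.+1 by apply/eqP => e; move: lq; rewrite e /= (negbTE np).
  have qnp : q != p by apply/eqP => e; move: rne; rewrite e eqxx.
  apply: gbound => //; move: nq; rewrite qne andbT => nq.
  by rewrite /gap q1 q2 nq lq rq.
- rewrite /gap /T2 /T1 => /and5P[q1 q2 /norP[nq qnp] lq rq].
  case: (eqVneq q p.+1) => [e|qne].
    rewrite e; have : (n - k.+1 = p)%N by []; lia.
  move: nq; rewrite qne andbT => nq.
  have lq' : T q.-1.
    move: lq => /orP[/andP[//]|/eqP e]; have eq : q = p.+1 by lia.
    by move: qne; rewrite eq eqxx.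
  have rq' : T q.+1.
    move: rq => /orP[/andP[//]|/eqP e]; have eq : q = p.-1 by lia.
    by move: nq; rewrite eq tl.
  apply: gbound => //.
  by rewrite /gap q1 q2 nq lq' rq'.
Qed.

Lemma D_all F T : D F T \in V.
Proof.
move: {2}#|F| (erefl #|F|) => k; elim: k F T => [|k IH] F T hF.
  have -> : F = set0 by apply/eqP; rewrite -cards_eq0 hF.
  exact: E_all.
have [p pF] : exists p, p \in F by apply/set0Pn; rewrite -cards_eq0 hF.
have hF' : #|F :\ p| = k by move: hF; rewrite (cardsD1 p F) pF; lia.
have -> : D F T = (D (F :\ p) T - D (F :\ p) (fun q => T q || (q == nat_of_ord p)))%R.
  apply/ffunP => u; rewrite ffunBE !DE.
  have sub : (F \subset Peak u) = (F :\ p \subset Peak u) && (p \in Peak u).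
    apply/idP/andP => [sF|[sF pP]].
      by split; [exact: subset_trans (subD1set F p) sF | exact: (subsetP sF)].
    apply/subsetP => x xF; case: (eqVneq x p) => [->//|nxp].
    by apply: (subsetP sF); rewrite !inE nxp xF.
  have fa : [forall r in Peak u, ~~ (T r || (nat_of_ord r == nat_of_ord p))] =
            [forall r in Peak u, ~~ T r] && (p \notin Peak u).
    apply/forall_inP/andP => [H|[/forall_inP H pn] r rP].
      split; first by apply/forall_inP => r rP; have := H r rP; rewrite negb_or => /andP[].
      by apply/negP => pP; have := H p pP; rewrite eqxx orbT.
    rewrite negb_or H //=; apply/negP => /eqP e.
    have er : r = p by apply: ord_inj.
    by move: pn; rewrite -er rP.
  rewrite sub fa.
  by case: (F :\ p \subset Peak u); case: (p \in Peak u); case: [forall r in Peak u, ~~ T r];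
    rewrite /= ?subr0 ?subrr.
by apply: rpredB; apply: IH.
Qed.

Lemma P_in F : Pk F \in V.
Proof.
have -> : Pk F = D F (fun q => ~~ [exists i in F, nat_of_ord i == q]).
  apply/ffunP => u; rewrite DE /Pk gelt_sum ffunE; congr (_%:R%R); congr (nat_of_bool _).
  rewrite eqEsubset andbC; congr andb.
  apply/subsetP/forall_inP => [H r rP|H r rP].
    by rewrite negbK; apply/existsP; exists r; rewrite H // eqxx.
  by have := H r rP; rewrite negbK => /existsP[i /andP[iF /eqP ir]]; rewrite -(ord_inj ir).
exact: D_all.
Qed.

Lemma Fring_peak (u : 'S_n) : Fring (Peak u).
Proof.
rewrite /Fring; apply/andP; split.
  apply/subsetP => i; rewrite /Peak !inE => /andP[h1 /andP[h2 _]]; by apply/andP.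
apply/forallP => i; apply/implyP => iP; apply/forallP => j; apply/implyP => jP.
by rewrite /= eq_sym; exact: peak_noadj iP jP.
Qed.

Lemma Pk_in_P F : Pk F \in Pspace n.
Proof.
case hF: (Fring F).
  by apply: memv_span; apply: image_f.
rewrite /Pk big_pred0 ?mem0v // => u.
by apply/negbTE/eqP => e; have := Fring_peak u; rewrite e hF.
Qed.

Lemma E_in_P T : E T \in Pspace n.
Proof.
rewrite /E /D (partition_big (fun u : 'S_n => Peak u) (fun F => [forall p in F, ~~ T p])) /=;
  last by move=> u /andP[].
apply: memv_suml => F hF.
have -> : (\sum_(u | (set0 \subset Peak u) && [forall p in Peak u, ~~ T p] && (Peak u == F)) gelt u)%R
    = Pk F.
  by rewrite /Pk; apply: eq_bigl => u; case: eqP => [->|_]; rewrite ?andbF ?sub0set ?hF.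
exact: Pk_in_P.
Qed.

Lemma img_sub (Q : pred {set 'I_n}) : (forall J, Q J -> inJ J 0 || inJ J 1) ->
  (phi n @: <<[seq X J | J in Q]>> <= Pspace n)%VS.
Proof.
move=> hQ; rewrite limg_span; apply/span_subvP => y /mapP[x /imageP[J QJ ->] ->].
by rewrite phiX ?hQ //; apply: memvZ; exact: E_in_P.
Qed.

Lemma P_sub : (Pspace n <= V)%VS.
Proof. by apply/span_subvP => y /imageP[F _ ->]; exact: P_in. Qed.
End Main.

Theorem theorem5p9 (n : nat) : (0 < n)%N ->
  (phi n @: I01 n)%VS = (phi n @: I0 n)%VS /\ (phi n @: I0 n)%VS = Pspace n.
Proof.
case: n => [//|m] _.
have V_P : (phi m.+1 @: I0 m.+1 <= Pspace m.+1)%VS.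
  by apply: img_sub => J hJ; apply/orP; left; exact: hJ.
have I01_P : (phi m.+1 @: I01 m.+1 <= Pspace m.+1)%VS.
  apply: img_sub => J /= /existsP[i /andP[iJ hi]].
  have [i0|i1] : nat_of_ord i = 0%N \/ nat_of_ord i = 1%N by move: hi => /= hi; lia.
    by apply/orP; left; apply/existsP; exists i; rewrite iJ /=; apply/eqP; exact: i0.
  by apply/orP; right; apply/existsP; exists i; rewrite iJ /=; apply/eqP; exact: i1.
have P_V := P_sub m.
have I0_I01 : (phi m.+1 @: I0 m.+1 <= phi m.+1 @: I01 m.+1)%VS.
  apply: limgS; apply: sub_span => x /imageP[J hJ ->]; apply: image_f.
  move: hJ; rewrite !unfold_in => /existsP[i /andP[iJ /eqP i0]].
  by apply/existsP; exists i; rewrite iJ /=; move: i0 => /= ->.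
split; apply/subv_anti/andP; split.
all: try done.
all: try exact: subv_trans I01_P P_V.
all: try exact: subv_trans V_P I0_I01.
Qed.
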